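(* QEPmin is in the hard case if and only if $g_0\perp\mathcal U$ and $\|(H-\lambda_{\min}(H)I)^{\dagger}g_0\|_2\le\gamma$, where $\lambda_{\min}(H)$ is the smallest eigenvalue of $H$ and $\mathcal U$ is the eigenspace of $H$ associated with $\lambda_{\min}(H)$.
   Context: Let $A\in\mathbb{R}^{n\times n}$ be symmetric, $C\in\mathbb{R}^{n\times m}$ ($m<n$) full column rank, $b\in\mathbb{R}^m$, $n_0=C(C^{\top}C)^{-1}b$ with $\|n_0\|<1$, $\gamma=\sqrt{1-\|n_0\|^2}$, $P=I-C(C^{\top}C)^{-1}C^{\top}$ (orthogonal projector onto $\mathcal N(C^{\top})$), $b_0=PAn_0$, assumed nonzero. Let $S_1\in\mathbb{R}^{n\times(n-m)}$ have orthonormal columns spanning $\mathcal N(C^{\top})$, $H=S_1^{\top}AS_1$, $g_0=S_1^{\top}b_0$. $X^\dagger$ is the Moore–Penrose inverse. QEPmin: minimize $\lambda$ over pairs $(\lambda,z)$ with $\lambda\in\mathbb{R}$, $0\neq z\in\mathcal N(C^{\top})$ and $(PAP-\lambda I)^2z=\gamma^{-2}b_0b_0^{\top}z$. QEPmin is in the hard case if it has a minimizer $(\lambda_*,z_* )$ with $b_0^{\top}z_*=0$; otherwise in the easy case. *)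

(* Defs.v *)
From mathcomp Require Import all_boot all_order all_algebra.
From Stdlib Require Import ClassicalEpsilon.
Set Implicit Arguments. Unset Strict Implicit. Unset Printing Implicit Defensive.
Import Order.TTheory GRing.Theory Num.Theory.
Local Open Scope ring_scope.

Section Defs.
Variable R : rcfType.

Definition norm2 k (v : 'cV[R]_k) : R := Num.sqrt ((v^T *m v) 0 0).

Definition is_pinv p q (X : 'M[R]_(p, q)) (Y : 'M[R]_(q, p)) : Prop :=
  [/\ X *m Y *m X = X, Y *m X *m Y = Y,
      (X *m Y)^T = X *m Y & (Y *m X)^T = Y *m X].

Definition pinv p q (X : 'M[R]_(p, q)) : 'M[R]_(q, p) :=
  epsilon (inhabits 0) (is_pinv X).

Definition n0 n m (C : 'M[R]_(n, m)) (b : 'cV[R]_m) : 'cV[R]_n :=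
  C *m invmx (C^T *m C) *m b.

Definition gamma n m (C : 'M[R]_(n, m)) (b : 'cV[R]_m) : R :=
  Num.sqrt (1 - norm2 (n0 C b) ^+ 2).

Definition Pproj n m (C : 'M[R]_(n, m)) : 'M[R]_n :=
  1%:M - C *m invmx (C^T *m C) *m C^T.

Definition b0 n m (A : 'M[R]_n) (C : 'M[R]_(n, m)) (b : 'cV[R]_m) : 'cV[R]_n :=
  Pproj C *m A *m n0 C b.

Definition QEP_feasible n m (A : 'M[R]_n) (C : 'M[R]_(n, m)) (b : 'cV[R]_m)
    (lam : R) (z : 'cV[R]_n) : Prop :=
  let M := Pproj C *m A *m Pproj C - lam%:M in
  [/\ z != 0, C^T *m z = 0 &
      M *m (M *m z) = (gamma C b ^- 2) *: (b0 A C b *m ((b0 A C b)^T *m z))].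

Definition QEP_minimizer n m (A : 'M[R]_n) (C : 'M[R]_(n, m)) (b : 'cV[R]_m)
    (lam : R) (z : 'cV[R]_n) : Prop :=
  QEP_feasible A C b lam z /\
  forall lam' z', QEP_feasible A C b lam' z' -> lam <= lam'.

Definition QEP_hard_case n m (A : 'M[R]_n) (C : 'M[R]_(n, m)) (b : 'cV[R]_m) : Prop :=
  exists lam z, QEP_minimizer A C b lam z /\ (b0 A C b)^T *m z = 0.

End Defs.

(* Main.v *)
Require Import Defs.
From mathcomp Require Import all_boot all_order all_algebra.
From mathcomp Require Import ring lra polyrcf complex.
From Stdlib Require Import Classical ClassicalEpsilon.
Import Order.TTheory GRing.Theory Num.Theory.
Set Implicit Arguments. Unset Strict Implicit. Unset Printing Implicit Defensive.
Local Open Scope ring_scope.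

Section PSD.
Variable R : rcfType.
Local Notation rc := (real_complex R).

Lemma rc_real (x : R) : (rc x : R[i]) \is Num.real.
Proof.
rewrite realE; case: (lerP 0 x) => hx; first by rewrite ler0c hx.
by rewrite -(rmorph0 rc) !lecR (ltW hx) orbT.
Qed.

Lemma psd_of_eig k (X : 'M[R]_k) : X^T = X ->
  (forall r, eigenvalue X r -> 0 <= r) ->
  forall y : 'cV_k, 0 <= (y^T *m X *m y) 0 0.
Proof.
move=> XT Xeig y.
pose Xc := map_mx rc X.
have Xcreal : Xc \is a mxOver Num.real by apply/mxOverP => i j; rewrite mxE rc_real.
have Xcsym : Xc \is symmetricmx.
  apply/is_hermitianmxP; rewrite expr0 scale1r.
  apply/matrixP => i j; rewrite !mxE /=.
  by rewrite -[X in LHS]XT mxE.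
have Xch : Xc \is hermsymmx by apply: realsym_hermsym.
have Xcn : Xc \is normalmx by apply: hermitian_normalmx.
have /orthomx_spectralP Hsp := Xcn.
have Pu : spectralmx Xc \is unitarymx := spectral_unitarymx Xc.
have dreal : spectral_diag Xc \is a mxOver Num.real := hermitian_spectral_diag_real Xch.
move: Hsp Pu dreal.
set P := spectralmx Xc; set d := spectral_diag Xc => Hsp Pu dreal.
have PXc : P *m Xc = diag_mx d *m P.
  by rewrite {1}Hsp invmx_unitary // !mulmxA (unitarymxP Pu) mul1mx.
have dge0 : forall j, 0 <= d 0 j.
  move=> j.
  have dj := mxOverP dreal 0 j.
  set r := complex.Re (d 0 j).
  have dr : d 0 j = rc r by rewrite /r complexRe; apply/esym/Creal_ReP.
  suff : eigenvalue X r by move/Xeig; rewrite dr ler0c.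
  have E : eigenvalue Xc (d 0 j) -> eigenvalue X r.
    by rewrite dr -(eigenvalue_map rc); apply.
  apply: E.
  apply/eigenvalueP; exists (row j P).
    have := congr1 (row j) PXc.
    by rewrite !row_mul row_diag_mx -scalemxAl -rowE.
  apply/eqP => h.
  move/row_unitarymxP: Pu => /(_ j j); rewrite h eqxx dotmxE mul0mx mxE.
  by move/eqP; rewrite eq_sym oner_eq0.
rewrite -ler0c.
pose yc := map_mx rc y.
have e1 : rc ((y^T *m X *m y) 0 0) = (yc^T *m Xc *m yc) 0 0.
  by rewrite /yc /Xc map_trmx -!map_mxM [RHS]mxE.
rewrite e1.
have ycr : yc^T \is a mxOver Num.real by apply/mxOverP => i j; rewrite !mxE rc_real.
have ycT : yc^T = map_mx Num.conj (yc^T) by rewrite realmxC.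
pose w := P *m yc.
have e2 : (yc^T *m Xc *m yc) = (map_mx Num.conj w^T) *m diag_mx d *m w.
  rewrite {1}Hsp invmx_unitary // /w trmx_mul map_mxM -ycT !mulmxA.
  reflexivity.
rewrite e2 mul_mx_diag mxE; apply: sumr_ge0 => j _; rewrite !mxE.
rewrite mulrC mulrA; apply: mulr_ge0; last exact: dge0.
exact: mul_conjC_ge0.
Qed.
End PSD.

Section Dot.
Variable R : rcfType.
Variable k : nat.
Implicit Types x y z : 'cV[R]_k.

Definition dot x y : R := \sum_i x i 0 * y i 0.

Lemma dotE x y : (x^T *m y) 0 0 = dot x y.
Proof. by rewrite mxE; apply: eq_bigr => i _; rewrite mxE. Qed.

Lemma dotM x y : x^T *m y = (dot x y)%:M.
Proof. by rewrite [LHS]mx11_scalar dotE. Qed.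

Lemma dotC x y : dot x y = dot y x.
Proof. by apply: eq_bigr => i _; rewrite mulrC. Qed.

Lemma dotDl x y z : dot (x + y) z = dot x z + dot y z.
Proof. by rewrite /dot -big_split; apply: eq_bigr => i _; rewrite mxE mulrDl. Qed.

Lemma dotDr x y z : dot z (x + y) = dot z x + dot z y.
Proof. by rewrite dotC dotDl !(dotC z). Qed.

Lemma dotZl a x y : dot (a *: x) y = a * dot x y.
Proof. by rewrite /dot mulr_sumr; apply: eq_bigr => i _; rewrite mxE mulrA. Qed.

Lemma dotZr a x y : dot x (a *: y) = a * dot x y.
Proof. by rewrite dotC dotZl dotC. Qed.

Lemma dotNl x y : dot (- x) y = - dot x y.
Proof. by rewrite -scaleN1r dotZl mulN1r. Qed.

Lemma dotNr x y : dot x (- y) = - dot x y.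
Proof. by rewrite dotC dotNl dotC. Qed.

Lemma dotBl x y z : dot (x - y) z = dot x z - dot y z.
Proof. by rewrite dotDl dotNl. Qed.

Lemma dotBr x y z : dot z (x - y) = dot z x - dot z y.
Proof. by rewrite dotDr dotNr. Qed.

Lemma dot0l x : dot 0 x = 0.
Proof. by rewrite /dot big1 // => i _; rewrite mxE mul0r. Qed.

Lemma dot0r x : dot x 0 = 0.
Proof. by rewrite dotC dot0l. Qed.

Lemma dot_mul x (A : 'M[R]_k) y : dot x (A *m y) = dot (A^T *m x) y.
Proof. by rewrite -!dotE trmx_mul trmxK mulmxA. Qed.

Lemma dot_ge0 x : 0 <= dot x x.
Proof. by apply: sumr_ge0 => i _; rewrite -expr2 sqr_ge0. Qed.

Lemma dot_eq0 x : dot x x = 0 -> x = 0.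
Proof.
move=> h; apply/matrixP => i j; rewrite ord1 mxE.
have /psumr_eq0P := h; move=> /(_ (fun i _ => ltac:(rewrite -expr2; exact: sqr_ge0)) i isT).
by move/eqP; rewrite mulf_eq0 orbb => /eqP.
Qed.

Lemma dot_gt0 x : x != 0 -> 0 < dot x x.
Proof.
move=> hx; rewrite lt_def dot_ge0 andbT; apply/eqP => /dot_eq0 h.
by rewrite h eqxx in hx.
Qed.

Lemma dot_expand x y : dot (x + y) (x + y) = dot x x + 2 * dot x y + dot y y.
Proof. rewrite !dotDl !dotDr (dotC y x); ring. Qed.

Lemma cauchy_schwarz x y : dot x y ^+ 2 <= dot x x * dot y y.
Proof.
have [->|hx] := eqVneq x 0; first by rewrite !dot0l expr0n /= mul0r.
have px := dot_gt0 hx.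
set s := dot x y / dot x x.
have h := dot_ge0 (y - s *: x).
rewrite !dotBl !dotBr !dotZl !dotZr (dotC y x) in h.
rewrite -subr_ge0.
have -> : dot x x * dot y y - dot x y ^+ 2 =
  dot x x * (dot y y - s * dot x y - (s * dot x y - s * (s * dot x x))).
  rewrite /s; field; exact: lt0r_neq0.
by apply: mulr_ge0 => //; exact: ltW.
Qed.

End Dot.

Section Gram.
Variable R : rcfType.

Lemma row_norm_eq0 k (u : 'rV[R]_k) : u *m u^T = 0 -> u = 0.
Proof.
move=> h; apply: trmx_inj; rewrite trmx0; apply: dot_eq0.
by rewrite -dotE trmxK h mxE.
Qed.

Lemma gram_unit p r (B : 'M[R]_(p, r)) : \rank B = r -> (B^T *m B) \in unitmx.
Proof.
move=> rB; rewrite -row_free_unit; apply/inj_row_free => v hv.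
have hfree : row_free B^T by rewrite /row_free mxrank_tr rB.
have h1 : (v *m B^T) *m (v *m B^T)^T = 0.
  by rewrite trmx_mul trmxK mulmxA -(mulmxA v) hv mul0mx.
have /eqP := row_norm_eq0 h1.
by rewrite mulmx_free_eq0 // => /eqP.
Qed.

Lemma col_inj_unit k (A : 'M[R]_k) : (forall z : 'cV_k, A *m z = 0 -> z = 0) -> A \in unitmx.
Proof.
move=> h; rewrite -unitmx_tr -row_free_unit; apply/inj_row_free => v hv.
apply: trmx_inj; rewrite trmx0; apply: h.
by rewrite -[A]trmxK -trmx_mul hv trmx0.
Qed.

Lemma sym_inv k (A : 'M[R]_k) : A^T = A -> (invmx A)^T = invmx A.
Proof. by move=> h; rewrite trmx_inv h. Qed.

Lemma pinv_fact p q r (Bc : 'M[R]_(p, r)) (Cr : 'M[R]_(r, q)) :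
  \rank Bc = r -> \rank Cr^T = r -> exists Y, is_pinv (Bc *m Cr) Y.
Proof.
move=> rB rC.
have uB := gram_unit rB.
have uC := gram_unit rC. rewrite trmxK in uC.
set GB := Bc^T *m Bc in uB *. set GC := Cr *m Cr^T in uC *.
have GBT : GB^T = GB by rewrite /GB trmx_mul trmxK.
have GCT : GC^T = GC by rewrite /GC trmx_mul trmxK.
exists (Cr^T *m invmx GC *m invmx GB *m Bc^T).
have AY : Bc *m Cr *m (Cr^T *m invmx GC *m invmx GB *m Bc^T) = Bc *m invmx GB *m Bc^T.
  by rewrite !mulmxA -(mulmxA Bc) -/GC mulmxK.
have YA : (Cr^T *m invmx GC *m invmx GB *m Bc^T) *m (Bc *m Cr) = Cr^T *m invmx GC *m Cr.
  by rewrite !mulmxA -(mulmxA _ Bc^T) -/GB mulmxKV.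
split.
- by rewrite AY !mulmxA -(mulmxA _ Bc^T) -/GB mulmxKV.
- by rewrite YA !mulmxA -(mulmxA _ Cr) -/GC mulmxKV.
- by rewrite AY !trmx_mul trmxK sym_inv // mulmxA.
- by rewrite YA !trmx_mul trmxK sym_inv // mulmxA.
Qed.

Lemma pinv_exists p q (A : 'M[R]_(p, q)) : exists Y, is_pinv A Y.
Proof.
rewrite -[A in is_pinv A]mulmx_base; apply: pinv_fact.
  by have := col_base_full A; rewrite /row_full => /eqP.
by rewrite mxrank_tr; have := row_base_free A; rewrite /row_free => /eqP.
Qed.

Lemma pinvP p q (A : 'M[R]_(p, q)) : is_pinv A (pinv A).
Proof. by rewrite /pinv; apply: epsilon_spec; apply: pinv_exists. Qed.

End Gram.

Section Reduced.
Variable R : rcfType.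
Variable k : nat.
Variables (H : 'M[R]_k) (g : 'cV[R]_k) (c lmin : R).
Hypothesis HT : H^T = H.
Hypothesis Hl : forall a, eigenvalue H a -> lmin <= a.
Hypothesis c_gt0 : 0 < c.
Hypothesis g_neq0 : g != 0.

Definition RF (lam : R) (y : 'cV[R]_k) : Prop :=
  y != 0 /\ (H - lam%:M) *m ((H - lam%:M) *m y) = c^-1 *: (g *m (g^T *m y)).

Let X := H - lmin%:M.

Lemma XT : X^T = X.
Proof. by rewrite /X linearB /= tr_scalar_mx HT. Qed.

Lemma X_psd y : 0 <= dot y (X *m y).
Proof.
rewrite -dotE mulmxA; apply: psd_of_eig; first exact: XT.
move=> r hr; suff : lmin <= lmin + r by lra.
apply: Hl; move: hr; rewrite /eigenvalue /eigenspace /X.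
by rewrite (raddfD (@scalar_mx R k)) opprD addrA.
Qed.

Definition B t := X + t%:M.

Lemma BT t : (B t)^T = B t.
Proof. by rewrite /B linearD /= tr_scalar_mx XT. Qed.

Lemma B_shift t : H - (lmin - t)%:M = B t.
Proof. by rewrite /B /X (raddfB (@scalar_mx R k)) opprB [t%:M - _]addrC addrA. Qed.

Lemma B_mul t (y : 'cV[R]_k) : B t *m y = X *m y + t *: y.
Proof. by rewrite /B mulmxDl mul_scalar_mx. Qed.

Lemma B_unit t : 0 < t -> B t \in unitmx.
Proof.
move=> t0; rewrite -row_free_unit -kermx_eq0; apply: contraT => nz.
have : eigenvalue H (lmin - t) by rewrite /eigenvalue /eigenspace B_shift.
move/Hl; lra.
Qed.

Lemma shift_bound t y : 0 < t -> t ^+ 2 * dot y y <= dot (B t *m y) (B t *m y).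
Proof.
move=> t0.
have -> : B t *m y = X *m y + t *: y by rewrite /B mulmxDl mul_scalar_mx.
rewrite dot_expand !dotZl !dotZr (dotC (X *m y) y).
have := X_psd y; have := dot_ge0 (X *m y); have := dot_ge0 y.
nra.
Qed.

Definition v t := invmx (B t) *m g.
Definition f t := dot (v t) (v t).

Lemma Bv t : 0 < t -> B t *m v t = g.
Proof. by move=> t0; rewrite /v mulKVmx // B_unit. Qed.

Lemma f_bound t : 0 < t -> t ^+ 2 * f t <= dot g g.
Proof. by move=> t0; rewrite /f -(Bv t0); apply: shift_bound. Qed.

Lemma f_ge0 t : 0 <= f t.
Proof. exact: dot_ge0. Qed.

Lemma RF_of_f t : 0 < t -> f t = c -> RF (lmin - t) (invmx (B t) *m v t).
Proof.
move=> t0 ft; rewrite /RF B_shift; split.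
  apply/eqP => h; move: g_neq0.
  by rewrite -(Bv t0) -[v t](mulKVmx (B_unit t0)) h mulmx0 mulmx0 eqxx.
rewrite !mulKVmx ?B_unit // dotM.
have -> : dot g (invmx (B t) *m v t) = f t.
  by rewrite dot_mul sym_inv ?BT.
by rewrite ft mul_mx_scalar scalerA mulVf ?scale1r // lt0r_neq0.
Qed.

Lemma f_of_RF t y : 0 < t -> RF (lmin - t) y -> f t = c.
Proof.
move=> t0 []; rewrite B_shift dotM mul_mx_scalar scalerA => ynz h.
set s := dot g y in h.
have hy : y = (c^-1 * s) *: (invmx (B t) *m v t).
  by rewrite /v !scalemxAr -h !mulKmx ?B_unit.
have hs : s = (c^-1 * s) * f t.
  by rewrite {1}/s {1}hy dotZr dot_mul sym_inv ?BT.
have s0 : s != 0.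
  apply: contra ynz => /eqP s0; rewrite hy s0 mulr0 scale0r //.
have : 1 = c^-1 * f t.
  by apply: (mulfI s0); rewrite mulr1 {1}hs; ring.
move=> h1; have cn0 : c != 0 by exact: lt0r_neq0.
by apply: (mulfI (invr_neq0 cn0)); rewrite -h1 mulVf.
Qed.

Lemma RF_ge lam y : RF lam y -> g^T *m y = 0 -> lmin <= lam.
Proof.
move=> [ynz h] gy; move: h; rewrite gy mulmx0 scaler0.
set M := H - lam%:M => h.
have MT : M^T = M by rewrite /M linearB /= tr_scalar_mx HT.
have My : M *m y = 0.
  apply: dot_eq0; rewrite dot_mul MT h dot0l //.
apply: Hl; apply/eigenvalueP; exists y^T; last by rewrite trmx_eq0.
have : y^T *m M = 0 by rewrite -MT -trmx_mul My trmx0.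
by rewrite /M mulmxBr mul_mx_scalar => /eqP; rewrite subr_eq0 => /eqP.
Qed.

Definition Cond1 := forall u : 'rV[R]_k, (u <= eigenspace H lmin)%MS -> u *m g = 0.

Lemma RF_lmin : eigenvalue H lmin -> Cond1 -> exists y, RF lmin y /\ g^T *m y = 0.
Proof.
move=> /eigenvalueP [u hu unz] hc.
have uX : u *m X = 0 by rewrite /X mulmxBr mul_mx_scalar hu subrr.
have ug : u *m g = 0 by apply: hc; apply/sub_kermxP.
have gy : g^T *m u^T = 0 by rewrite -trmx_mul ug trmx0.
exists u^T; split => //; split; first by rewrite trmx_eq0.
have -> : (H - lmin%:M) *m u^T = 0 by rewrite -/X -XT -trmx_mul uX trmx0.
by rewrite gy mulmx0 mulmx0 scaler0.
Qed.

Let W := pinv X.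
Let Pi := 1%:M - X *m W.

Lemma pinvX : [/\ X *m W *m X = X, W *m X *m W = W,
      (X *m W)^T = X *m W & (W *m X)^T = W *m X].
Proof. exact: pinvP. Qed.

Lemma PiX : Pi *m X = 0.
Proof. by case: pinvX => h1 _ _ _; rewrite /Pi mulmxBl mul1mx h1 subrr. Qed.

Lemma PiT : Pi^T = Pi.
Proof. by case: pinvX => _ _ h3 _; rewrite /Pi linearB /= tr_scalar_mx h3. Qed.

Lemma XPi : X *m Pi = 0.
Proof. by have := congr1 trmx PiX; rewrite trmx_mul XT PiT trmx0. Qed.

Lemma PiW : Pi *m W = 0.
Proof.
case: pinvX => _ h2 _ h4.
have -> : W = X *m (W^T *m W) by rewrite -{1}h2 -h4 trmx_mul XT mulmxA.
by rewrite !mulmxA PiX !mul0mx.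
Qed.

Lemma PiPi : Pi *m Pi = Pi.
Proof. by rewrite {2}/Pi mulmxBr mulmx1 mulmxA PiX mul0mx subr0. Qed.

Lemma Pig : Cond1 -> Pi *m g = 0.
Proof.
move=> hc.
have : (Pi *m g)^T *m g = 0.
  apply: hc; rewrite /eigenspace -/X; apply/sub_kermxP.
  by rewrite trmx_mul PiT -mulmxA PiX mulmx0.
rewrite dotM => /(congr1 (fun M : 'M_1 => M 0 0)); rewrite !mxE eqxx mulr1n => h.
by apply: dot_eq0; rewrite dot_mul PiT mulmxA PiPi.
Qed.

Let w := W *m g.

Lemma Xw : Cond1 -> X *m w = g.
Proof.
move=> /Pig; rewrite /Pi mulmxBl mul1mx => /eqP; rewrite subr_eq0 => /eqP h.
by rewrite /w mulmxA -h.
Qed.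

Lemma Piw : Pi *m w = 0.
Proof. by rewrite /w mulmxA PiW mul0mx. Qed.

Lemma no_feas_f t : Cond1 -> dot w w <= c -> 0 < t -> f t < c.
Proof.
move=> hc hw t0.
set vv := v t.
have hBv : B t *m vv = g by apply: Bv.
have Xv : X *m vv = g - t *: vv.
  by rewrite -hBv B_mul addrK.
set d := w - vv.
have Xd : X *m d = t *: vv by rewrite /d mulmxBr Xw // Xv opprB addrC subrK.
have wd : w = vv + d by rewrite /d addrC subrK.
have vd : vv = t^-1 *: (X *m d) by rewrite Xd scalerA mulVf ?scale1r // lt0r_neq0.
have dvd : 0 <= dot vv d.
  rewrite {1}vd dotZl dotC; apply: mulr_ge0; first by rewrite invr_ge0 ltW.
  exact: X_psd.
have dnz : d != 0.
  apply/eqP => d0; move: g_neq0; rewrite -hBv.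
  have : t *: vv = 0 by rewrite -Xd d0 mulmx0.
  by move/eqP; rewrite scaler_eq0 (negbTE (lt0r_neq0 t0)) /= => /eqP ->; rewrite mulmx0 eqxx.
have := dot_gt0 dnz.
have : dot w w = f t + 2 * dot vv d + dot d d by rewrite wd dot_expand.
move: hw; rewrite /f -/vv; nra.
Qed.

Lemma no_feas lam y : Cond1 -> dot w w <= c -> lam < lmin -> ~ RF lam y.
Proof.
move=> hc hw hl hrf.
have t0 : 0 < lmin - lam by lra.
have := no_feas_f hc hw t0.
have -> : f (lmin - lam) = c by apply: (f_of_RF (y := y)); rewrite // opprB addrC subrK.
by rewrite ltxx.
Qed.

Definition Mt (M0 M1 : 'M[R]_k) t := M0 + t *: M1.
Definition Pf M0 M1 t :=
  c * \det (Mt M0 M1 t) ^+ 2 - dot (\adj (Mt M0 M1 t) *m g) (\adj (Mt M0 M1 t) *m g).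

Lemma Pf_poly M0 M1 : exists p : {poly R}, forall t, p.[t] = Pf M0 M1 t.
Proof.
pose Mp : 'M[{poly R}]_k := \matrix_(i, j) ((M0 i j)%:P + 'X * (M1 i j)%:P).
pose gp := map_mx polyC g.
exists (c%:P * (\det Mp) ^+ 2 - \sum_i ((\adj Mp *m gp) i 0) ^+ 2) => t.
have hM : map_mx (horner_eval t) Mp = Mt M0 M1 t.
  apply/matrixP => i j; rewrite !mxE /= horner_evalE hornerD hornerM hornerC hornerX hornerC.
  by [].
have hg : map_mx (horner_eval t) gp = g.
  by apply/matrixP => i j; rewrite !mxE /= horner_evalE hornerC.
rewrite -horner_evalE rmorphB rmorphM rmorphXn -det_map_mx hM rmorph_sum.
rewrite /= !horner_evalE hornerC /Pf /dot; congr (_ - _); apply: eq_bigr => i _.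
rewrite horner_evalE horner_exp expr2.
have -> : ((\adj Mp *m gp) i 0).[t] = (\adj (Mt M0 M1 t) *m g) i 0.
  by rewrite -horner_evalE -hM -hg -(map_mx_adj (horner_eval t)) -(map_mxM (horner_eval t)) [RHS]mxE.
by [].
Qed.

Lemma Pf_ivt M0 M1 a b : a <= b -> Pf M0 M1 a * Pf M0 M1 b < 0 ->
  exists t, [/\ a < t, t < b & Pf M0 M1 t = 0].
Proof.
move=> hab hs; have [p hp] := Pf_poly M0 M1.
have := @poly_ivtoo R p a b hab; rewrite !hp => /(_ hs) [t].
rewrite in_itv /= => /andP [h1 h2]; rewrite /root hp => /eqP h3.
by exists t.
Qed.

Lemma adjE (A : 'M[R]_k) : A \in unitmx -> \adj A = \det A *: invmx A.
Proof.
move=> hu; have hd : \det A != 0 by rewrite -unitfE -unitmxE.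
by rewrite /invmx hu scalerA mulfV // scale1r.
Qed.

Lemma Pf_unit M0 M1 t : Mt M0 M1 t \in unitmx ->
  Pf M0 M1 t = \det (Mt M0 M1 t) ^+ 2 *
     (c - dot (invmx (Mt M0 M1 t) *m g) (invmx (Mt M0 M1 t) *m g)).
Proof.
move=> hu; rewrite /Pf adjE // -scalemxAl dotZl dotZr; ring.
Qed.

Lemma det_sq_gt0 (A : 'M[R]_k) : A \in unitmx -> 0 < \det A ^+ 2.
Proof.
move=> hu; have hd : \det A != 0 by rewrite -unitfE -unitmxE.
by rewrite exprn_even_gt0.
Qed.


Lemma big_T : 1 <= dot g g / c + 1 /\ f (dot g g / c + 1) < c.
Proof.
set T := dot g g / c + 1.
have G0 := dot_ge0 g.
have T1 : 1 <= T by rewrite /T lerDr divr_ge0 // ltW.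
have T0 : 0 < T by lra.
have hcT : c * T = dot g g + c by rewrite /T mulrDr mulrC divfK ?mulr1 // lt0r_neq0.
split => //.
have h0 : dot g g + c <= (dot g g + c) * T.
  nra.
have h1 : dot g g < c * T ^+ 2.
  rewrite expr2 mulrA hcT; apply: (lt_le_trans _ h0); by rewrite ltrDl.
have h2 : 0 < T ^+ 2 by rewrite exprn_gt0.
have := f_bound T0; have := f_ge0 T.
move=> hf0 hfb; rewrite ltNge; apply/negP => hc.
have : c * T ^+ 2 <= f T * T ^+ 2 by rewrite ler_pM2r.
rewrite mulrC in hfb; lra.
Qed.

Lemma finish (M0 M1 : 'M[R]_k) t : 0 < t -> Pf M0 M1 t = 0 -> Mt M0 M1 t \in unitmx ->
  invmx (Mt M0 M1 t) *m g = v t -> exists lam y, lam < lmin /\ RF lam y.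
Proof.
move=> t0 hP hu hv.
have := Pf_unit hu; rewrite hP hv -/(f t) => /esym /eqP.
rewrite mulf_eq0 (negbTE (lt0r_neq0 (det_sq_gt0 hu))) /= subr_eq0 => /eqP hf.
exists (lmin - t), (invmx (B t) *m v t); split; first lra.
by apply: RF_of_f.
Qed.

Lemma feasA (u : 'rV[R]_k) : (u <= eigenspace H lmin)%MS -> u *m g != 0 ->
  exists lam y, lam < lmin /\ RF lam y.
Proof.
move=> /sub_kermxP uX ug; rewrite -/X in uX.
have ug0 : (u *m g) 0 0 != 0.
  apply: contra ug => /eqP h; apply/eqP/matrixP => i j.
  by rewrite !ord1 h mxE.
set al := (u *m g) 0 0 ^+ 2.
have a0 : 0 < al by rewrite /al exprn_even_gt0.
have unz : u != 0 by apply: contra ug => /eqP ->; rewrite mul0mx.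
set nu := dot u^T u^T.
have nu0 : 0 < nu by apply: dot_gt0; rewrite trmx_eq0.
set be := c * nu.
have b0 : 0 < be by rewrite /be mulr_gt0.
set de := al / (al + be).
have hde : de * (al + be) = al by rewrite /de divfK // lt0r_neq0 // addr_gt0.
have de0 : 0 < de by rewrite /de divr_gt0 // addr_gt0.
have de1 : de < 1 by rewrite /de ltr_pdivrMr ?addr_gt0 // mul1r ltrDl.
have [T1 fT] := big_T; set T := dot g g / c + 1 in T1 fT.
have fde : c < f de.
  have uB : u *m B de = de *: u by rewrite /B mulmxDr uX add0r mul_mx_scalar.
  have ugE : u *m g = de *: (u *m v de) by rewrite -(Bv de0) mulmxA uB -scalemxAl.
  have e1 : (u *m g) 0 0 = de * dot u^T (v de).
    by rewrite ugE mxE -dotE trmxK.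
  have cs := cauchy_schwarz u^T (v de).
  have e2 : al = de ^+ 2 * dot u^T (v de) ^+ 2 by rewrite /al e1 exprMn.
  rewrite -/nu -/(f de) in cs.
  have fge := f_ge0 de.
  rewrite ltNge; apply/negP => hf.
  have h3 : al <= de ^+ 2 * be.
    rewrite e2 /be; apply: ler_wpM2l; first exact: sqr_ge0.
    apply: (le_trans cs); rewrite mulrC ler_wpM2r // ltW //.
  have h4 : de ^+ 2 * be < al.
    have : de ^+ 2 * be < de * be by rewrite ltr_pM2r // expr2; nra.
    nra.
  by have := lt_le_trans h4 h3; rewrite ltxx.
have MtB t : Mt X 1%:M t = B t by rewrite /Mt scalemx1.
have [t [ht1 ht2 hP]] : exists t, [/\ de < t, t < T & Pf X 1%:M t = 0].
  apply: Pf_ivt; first lra.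
  rewrite !Pf_unit ?MtB ?B_unit //; try lra.
  have h1 := det_sq_gt0 (B_unit de0).
  have h2 := det_sq_gt0 (B_unit (lt_le_trans ltr01 T1)).
  rewrite -/(v de) -/(v T) -/(f de) -/(f T).
  have n1 : \det (B de) ^+ 2 * (c - f de) < 0 by rewrite pmulr_rlt0 // subr_lt0.
  have p2 : 0 < \det (B T) ^+ 2 * (c - f T) by rewrite pmulr_rgt0 // subr_gt0.
  by rewrite nmulr_rlt0.
apply: (finish (M0 := X) (M1 := 1%:M) (t := t)) => //; first lra.
  by rewrite MtB B_unit //; lra.
by rewrite MtB.
Qed.


Lemma PiB t (z : 'cV[R]_k) : Pi *m (B t *m z) = t *: (Pi *m z).
Proof. by rewrite B_mul mulmxDr mulmxA PiX mul0mx add0r scalemxAr. Qed.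

Lemma MtE t (z : 'cV[R]_k) :
  Mt (X + Pi) (1%:M - Pi) t *m z = B t *m z + (1 - t) *: (Pi *m z).
Proof.
rewrite /Mt (mulmxDl (X + Pi)) (mulmxDl X Pi) -scalemxAl (mulmxBl 1%:M Pi) mul1mx B_mul scalerBr scalerBl scale1r.
by rewrite addrACA.
Qed.

Lemma Mt_pos t : Cond1 -> 0 < t ->
  Mt (X + Pi) (1%:M - Pi) t \in unitmx /\
  invmx (Mt (X + Pi) (1%:M - Pi) t) *m g = v t.
Proof.
move=> hc t0.
have hu : Mt (X + Pi) (1%:M - Pi) t \in unitmx.
  apply: col_inj_unit => z hz.
  have hPz : Pi *m z = 0.
    have := congr1 (mulmx Pi) hz; rewrite mulmx0 MtE mulmxDr PiB -scalemxAr mulmxA PiPi.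
    by rewrite -scalerDl addrC subrK scale1r.
  move: hz; rewrite MtE hPz scaler0 addr0 => hz.
  by rewrite -[z](mulKmx (B_unit t0)) hz mulmx0.
split => //.
have hPv : Pi *m v t = 0.
  have := Pig hc; rewrite -(Bv t0) PiB => /eqP; rewrite scaler_eq0.
  by rewrite (negbTE (lt0r_neq0 t0)) /= => /eqP.
have : Mt (X + Pi) (1%:M - Pi) t *m v t = g by rewrite MtE hPv scaler0 addr0 Bv.
by move=> <-; rewrite mulKmx.
Qed.

Lemma feasB : Cond1 -> c < dot w w -> exists lam y, lam < lmin /\ RF lam y.
Proof.
move=> hc hw.
have Mt0 : Mt (X + Pi) (1%:M - Pi) 0 = X + Pi by rewrite /Mt scale0r addr0.
have hu0 : X + Pi \in unitmx.
  apply: col_inj_unit => z hz.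
  have hPz : Pi *m z = 0.
    by have := congr1 (mulmx Pi) hz; rewrite mulmx0 (mulmxDl X Pi) mulmxDr !mulmxA PiX mul0mx add0r PiPi.
  have hXz : X *m z = 0 by move: hz; rewrite mulmxDl hPz addr0.
  case: pinvX => _ _ h3 _.
  have e1 : 1%:M = X *m W + Pi by rewrite /Pi addrC subrK.
  by rewrite -[z]mul1mx e1 mulmxDl hPz addr0 -h3 trmx_mul XT -mulmxA hXz mulmx0.
have hw0 : invmx (X + Pi) *m g = w.
  have : (X + Pi) *m w = g by rewrite mulmxDl Xw // Piw addr0.
  by move=> <-; rewrite mulKmx.
have [T1 fT] := big_T; set T := dot g g / c + 1 in T1 fT.
have T0 : 0 < T by apply: (lt_le_trans ltr01 T1).
have [t [ht1 ht2 hP]] : exists t, [/\ 0 < t, t < T & Pf (X + Pi) (1%:M - Pi) t = 0].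
  apply: Pf_ivt; first exact: ltW.
  have [huT hvT] := Mt_pos hc T0.
  rewrite !Pf_unit ?Mt0 // hw0 hvT -/(f T).
  have h1 := det_sq_gt0 hu0.
  have h2 := det_sq_gt0 huT.
  have n1 : \det (X + Pi) ^+ 2 * (c - dot w w) < 0 by rewrite pmulr_rlt0 // subr_lt0.
  have p2 : 0 < \det (Mt (X + Pi) (1%:M - Pi) T) ^+ 2 * (c - f T).
    by rewrite pmulr_rgt0 // subr_gt0.
  by rewrite nmulr_rlt0.
have [hut hvt] := Mt_pos hc ht1.
exact: (finish ht1 hP hut hvt).
Qed.

Definition Cond := Cond1 /\ dot w w <= c.

Lemma red_none lam y : Cond -> lam < lmin -> ~ RF lam y.
Proof. by move=> [h1 h2]; apply: no_feas. Qed.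

Lemma red_some : ~ Cond -> exists lam y, lam < lmin /\ RF lam y.
Proof.
move=> hn.
case: (classic Cond1) => hc.
  apply: feasB => //; rewrite ltNge; apply/negP => hle; exact: hn.
have [u hu] := not_all_ex_not _ _ hc.
have [h1 h2] := imply_to_and _ _ hu.
by apply: (feasA h1); apply/eqP.
Qed.

End Reduced.

Lemma norm2E (R : rcfType) k (v : 'cV[R]_k) : norm2 v = Num.sqrt (dot v v).
Proof. by rewrite /norm2 dotE. Qed.

Lemma sqrt_le_iff (R : rcfType) (x y : R) : 0 <= y -> (Num.sqrt x <= y) = (x <= y ^+ 2).
Proof.
move=> y0; rewrite -{1}(ger0_norm y0) -sqrtr_sqr ler_sqrt //.
exact: sqr_ge0.
Qed.

Theorem theorem2p12 (R : rcfType) (n m : nat)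
    (A : 'M[R]_n) (C : 'M[R]_(n, m)) (b : 'cV[R]_m)
    (S1 : 'M[R]_(n, n - m)) (lmin : R) :
  (m < n)%N ->
  A^T = A ->
  \rank C = m ->
  norm2 (n0 C b) < 1 ->
  b0 A C b != 0 ->
  S1^T *m S1 = 1%:M ->
  (forall z : 'cV[R]_n, C^T *m z = 0 <-> exists y : 'cV[R]_(n - m), z = S1 *m y) ->
  let H := S1^T *m A *m S1 in
  let g0 := S1^T *m b0 A C b in
  eigenvalue H lmin ->
  (forall a, eigenvalue H a -> lmin <= a) ->
  (QEP_hard_case A C b <->
    ((forall u : 'rV[R]_(n - m), (u <= eigenspace H lmin)%MS -> u *m g0 = 0) /\
     norm2 (pinv (H - lmin%:M) *m g0) <= gamma C b)).
Proof.
move=> hmn hA hrk hn0 hb0 hS hN H g0 heig hmin.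
set gam := gamma C b.
have gam0 : 0 < gam.
  rewrite /gam /gamma sqrtr_gt0 subr_gt0.
  have h0 : 0 <= norm2 (n0 C b) by rewrite /norm2 sqrtr_ge0.
  by rewrite expr2; nra.
set c := gam ^+ 2.
have c0 : 0 < c by rewrite exprn_gt0.
have hG : (C^T *m C) \in unitmx by apply: gram_unit.
set P := Pproj C.
have GT : (C^T *m C)^T = C^T *m C by rewrite trmx_mul trmxK.
have PT : P^T = P.
  rewrite /P /Pproj linearB /= tr_scalar_mx !trmx_mul trmxK sym_inv //.
  by rewrite mulmxA.
have CP : C^T *m P = 0.
  by rewrite /P /Pproj mulmxBr mulmx1 !mulmxA mulmxV // mul1mx subrr.
have CS1 : C^T *m S1 = 0.
  apply/matrixP => i j.
  have := (proj2 (hN (S1 *m delta_mx j 0))) (ex_intro _ _ erefl).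
  rewrite mulmxA -colE => /(congr1 (fun M : 'cV_m => M i 0)).
  by rewrite !mxE.
have PS1 : P *m S1 = S1.
  by rewrite /P /Pproj mulmxBl mul1mx -(mulmxA _ C^T S1) CS1 mulmx0 subr0.
have S1P : S1^T *m P = S1^T by rewrite -PT -trmx_mul PS1.
have Pdef : P = S1 *m S1^T.
  have hx : forall x : 'cV_n, P *m x = S1 *m (S1^T *m x).
    move=> x; have hPx : C^T *m (P *m x) = 0 by rewrite mulmxA CP mul0mx.
    have [y hy] := (proj1 (hN (P *m x))) hPx.
    rewrite hy; congr (S1 *m _).
    by rewrite -[y]mul1mx -hS -mulmxA -hy mulmxA S1P.
  apply/matrixP => i j.
  have := congr1 (fun M : 'cV_n => M i 0) (hx (delta_mx j 0)).
  by rewrite mulmxA -!colE !mxE.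
have b0E : b0 A C b = S1 *m g0.
  rewrite /g0 /b0 -/P Pdef.
  by rewrite !mulmxA -(mulmxA S1 S1^T S1) hS mulmx1.
have HT : H^T = H by rewrite /H !trmx_mul trmxK hA mulmxA.
have g0nz : g0 != 0 by apply: contra hb0; rewrite b0E => /eqP ->; rewrite mulmx0.
have PAP : P *m A *m P = S1 *m H *m S1^T by rewrite Pdef /H !mulmxA.
have S1inj : forall y1 y2 : 'cV_(n - m), S1 *m y1 = S1 *m y2 -> y1 = y2.
  move=> y1 y2 h; rewrite -[y1]mul1mx -[y2]mul1mx -hS -!mulmxA h //.
have key : forall lam (y : 'cV_(n - m)),
    (P *m A *m P - lam%:M) *m (S1 *m y) = S1 *m ((H - lam%:M) *m y).
  move=> lam y; rewrite PAP !mulmxBl !mulmxBr mul_scalar_mx mul_scalar_mx.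
  by rewrite -scalemxAr -!mulmxA (mulmxA S1^T S1 y) hS mul1mx.
have b0z : forall y : 'cV_(n - m), (b0 A C b)^T *m (S1 *m y) = g0^T *m y.
  by move=> y; rewrite b0E trmx_mul -mulmxA (mulmxA S1^T S1 y) hS mul1mx.
have rhsE : forall y : 'cV_(n - m), c^-1 *: (b0 A C b *m ((b0 A C b)^T *m (S1 *m y))) =
    S1 *m (c^-1 *: (g0 *m (g0^T *m y))).
  by move=> y; rewrite b0z b0E -mulmxA scalemxAr.
have feasE : forall lam z, QEP_feasible A C b lam z <->
    exists y, z = S1 *m y /\ RF H g0 c lam y.
  move=> lam z; split.
    case=> znz hz heq; have [y hy] := (proj1 (hN z)) hz.
    exists y; split => //; split.
      by apply: contra znz => /eqP y0; rewrite hy y0 mulmx0.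
    apply: S1inj; move: heq; rewrite -/P hy key key -/c rhsE //.
  case=> y [-> [ynz hy]]; split.
  - apply: contra ynz => /eqP h.
    by rewrite -[y]mul1mx -hS -mulmxA h mulmx0.
  - by rewrite mulmxA CS1 mul0mx.
  - by rewrite -/P key key -/c rhsE hy.
have CondE : ((forall u : 'rV[R]_(n - m), (u <= eigenspace H lmin)%MS -> u *m g0 = 0) /\
     norm2 (pinv (H - lmin%:M) *m g0) <= gam) <-> Cond H g0 c lmin.
  by rewrite /Cond /= norm2E sqrt_le_iff // ltW.
rewrite /QEP_hard_case CondE; split.
  case=> lam [z [[hf hmin'] hb]].
  have [y [hz hrf]] := (proj1 (feasE _ _)) hf.
  have gy : g0^T *m y = 0 by rewrite -b0z -hz.
  have hl := RF_ge HT hmin hrf gy.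
  apply: NNPP => hn.
  have [lam' [y' [hl' hrf']]] := red_some HT hmin c0 g0nz hn.
  have := hmin' lam' (S1 *m y') ((proj2 (feasE _ _)) (ex_intro _ y' (conj erefl hrf'))).
  move=> h; have := le_lt_trans h hl'; have := le_lt_trans hl (le_lt_trans h hl').
  by rewrite ltxx.
move=> hc.
have [y [hrf gy]] := RF_lmin c HT heig (proj1 hc).
exists lmin, (S1 *m y); split; last by rewrite b0z.
split; first by apply/feasE; exists y.
move=> lam' z' /feasE [y' [_ hrf']].
rewrite leNgt; apply/negP => hlt.
exact: (red_none HT hmin c0 g0nz hc hlt hrf').
Qed.
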